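(* The finite set $\widetilde{\mathcal{S}}$ admits a unique ordered partition $$\widetilde{\mathcal{S}}=\bigcup_{i=0}^{\ell'+1}\widetilde{\mathcal{S}}_i$$ into pairwise disjoint, possibly empty, subsets such that (i) for $0\le i_0<i\le\ell'+1$, elements $y_0\in\mathcal{S}^{\mathbf G}_{i_0}$ and $x\in\widetilde{\mathcal{S}}_i$ are either incomparable or satisfy $x\succ y_0$; (ii) for every $x_0\in\widetilde{\mathcal{S}}_{i_0}$ and every integer $i$ with $i_0\le i\le\ell'$, there exists $y\in\mathcal{S}^{\mathbf G}_i$ with $y\succ x_0$. Moreover, this partition satisfies (iii) for $0\le i_0<i\le\ell'+1$, elements $x_0\in\widetilde{\mathcal{S}}_{i_0}$ and $x\in\widetilde{\mathcal{S}}_i$ are either incomparable or satisfy $x\succ x_0$.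
   Context: Let $F$ be a number field with adèles $\mathbb{A}$, $D$ a central division algebra over $F$ of degree $d>1$, $G'_m$ the group of invertible elements of $M_m(D)$, $G_m=GL_m$ over $F$; parabolics are standard (block-upper-triangular), attached to ordered partitions; $\nu$ is the absolute value of reduced norm (resp. determinant). For the parabolic attached to $(n_1,\dots,n_r)$, third entries are $\underline z\in\mathbb{R}^r$ with $\sum n_jz_j=0$, $z_1\ge\dots\ge z_r$, $\nu_{\underline z}=\prod\nu(\ell_j)^{z_j}$; $\iota'$ (for $G'_n$) and $\iota$ (for $G_{nd}$) send $\underline z$ to $(z_1,\dots,z_1,\dots,z_r,\dots,z_r)$ with $z_j$ repeated $n_j$ times. Partial order on $\mathbb{R}^N$: $\underline s\succ\underline t$ iff $\underline s\ne\underline t$ and $\sum_{j\le i}s_j\le\sum_{j\le i}t_j$ for $i=1,\dots,N-1$; comparable means one is $\succ$ the other. Fix a cuspidal automorphic representation $\pi'$ of the Levi factor of a parabolic $P'$ of $G'_n$ and let $\sigma$ be the cuspidal representation of the Levi factor of a parabolic $Q$ of $G_{nd}$ given by the cuspidal support of its factorwise global Jacquet–Langlands transfer $\mathbf G(\pi')$ (Badulescu). $\mathcal{M}'$ (resp. $\mathcal{M}$) is the set of triples $(R',\Pi',\underline z')$ with $R'$ a parabolic of $G'_n$ containing an element associate to $P'$, $\Pi'$ a unitary discrete spectrum representation of its Levi factor, $\underline z'$ in the closed positive chamber, such that the cuspidal support of $\Pi'\otimes\nu_{\underline z'}$ is associate to $\pi'$ (resp. the same for $G_{nd}$, $Q$,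 $\sigma$). The map $\mathbf G:\mathcal{M}'\to\mathcal{M}$ sends $(R',\Pi'_1\otimes\cdots\otimes\Pi'_r,\underline z')$, $R'$ attached to $(n_1,\dots,n_r)$, to $(R,\mathbf G(\Pi'_1)\otimes\cdots\otimes\mathbf G(\Pi'_r),\underline z')$, $R$ attached to $(n_1d,\dots,n_rd)$. Let $\mathcal{S}'=\{\iota'(\underline z'):(R',\Pi',\underline z')\in\mathcal{M}'\}$ and $\mathcal{S}=\{\iota(\underline z):(R,\Pi,\underline z)\in\mathcal{M}\}$ (finite sets). Partition $\mathcal{S}'$: let $\mathcal{S}^{\rm aux}_0$ be the set of $\succ$-maximal elements of $\mathcal{S}'$ and inductively $\mathcal{S}^{\rm aux}_i$ the maximal elements of $\mathcal{S}'\setminus\bigcup_{j<i}\mathcal{S}^{\rm aux}_j$, until exhausted after $\ell'+1$ steps; $\mathcal{S}'_i=\mathcal{S}^{\rm aux}_{\ell'-i}$. Define $\mathcal{S}^{\mathbf G}_i=\{\iota(\mathbf G(\underline z')):\iota'(\underline z')\in\mathcal{S}'_i\}$ for $0\le i\le\ell'$, where $\iota(\mathbf G(\underline z'))$ is obtained from $\iota'(\underline z')$ by repeating each coordinate $d$ times, $\mathcal{S}^{\mathbf G}=\bigcup_i\mathcal{S}^{\mathbf G}_i$, and $\widetilde{\mathcal{S}}=\mathcal{S}\setminus\mathcal{S}^{\mathbf G}$. *)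

(* Defs.v *)
From HB Require Import structures.
From mathcomp Require Import all_boot all_order all_algebra.
Set Implicit Arguments.
Unset Strict Implicit.
Unset Printing Implicit Defensive.
Import Order.TTheory GRing.Theory Num.Theory.
Local Open Scope ring_scope.

Section Defs.
Variable R : realFieldType.

Definition psum N (s : 'rV[R]_N) (k : nat) : R :=
  \sum_(j < N | (j < k)%N) s 0 j.

Definition succ N (s t : 'rV[R]_N) : bool :=
  (s != t) && [forall i : 'I_N, (i.+1 < N)%N ==> (psum s i.+1 <= psum t i.+1)].

Definition comparable N (s t : 'rV[R]_N) : bool := succ s t || succ t s.

(* vectors of the form iota(z): nonincreasing coordinates, total sum 0 *)
Definition chamber_vec N (s : 'rV[R]_N) : Prop :=
  (forall i j : 'I_N, (i <= j)%N -> s 0 j <= s 0 i) /\ \sum_(j < N) s 0 j = 0.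

Definition maxel N (X : seq 'rV[R]_N) : seq 'rV[R]_N :=
  [seq x <- X | ~~ has (fun y => succ y x) X].

(* remainder after removing k layers of maximal elements:
   rem_k = S' \ (S^aux_0 ∪ ... ∪ S^aux_{k-1}) *)
Definition remk N (S' : seq 'rV[R]_N) (k : nat) : seq 'rV[R]_N :=
  iter k (fun X => [seq x <- X | x \notin maxel X]) S'.

Definition Saux N (S' : seq 'rV[R]_N) (k : nat) := maxel (remk S' k).

(* S'_i = S^aux_{l'-i} *)
Definition Slev N (S' : seq 'rV[R]_N) (l i : nat) := Saux S' (l - i).

(* iota(G(z')) : repeat each coordinate d times *)
Definition Gmap n d (s : 'rV[R]_n) : 'rV[R]_(n * d) :=
  mxvec (\matrix_(i < n, j < d) s 0 i).

Definition SG n d (S' : seq 'rV[R]_n) (l i : nat) : seq 'rV[R]_(n * d) :=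
  map (@Gmap n d) (Slev S' l i).

Definition inSG n d (S' : seq 'rV[R]_n) (l : nat) (x : 'rV[R]_(n * d)) : bool :=
  has (fun i => x \in @SG n d S' l i) (iota 0 l.+1).

Definition Stilde n d (S' : seq 'rV[R]_n) (S : seq 'rV[R]_(n * d)) (l : nat) :=
  [seq x <- S | ~~ @inSG n d S' l x].

Definition is_partition n d (S' : seq 'rV[R]_n) (S : seq 'rV[R]_(n * d)) (l : nat)
  (P : nat -> 'rV[R]_(n * d) -> bool) : Prop :=
  [/\ (forall i x, (i <= l.+1)%N -> P i x -> x \in Stilde S' S l),
      (forall x, x \in Stilde S' S l -> exists2 i, (i <= l.+1)%N & P i x) &
      (forall i j x, (i <= l.+1)%N -> (j <= l.+1)%N -> P i x -> P j x -> i = j)].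

Definition cond_i n d (S' : seq 'rV[R]_n) (l : nat)
  (P : nat -> 'rV[R]_(n * d) -> bool) : Prop :=
  forall i0 i y0 x, (i0 < i)%N -> (i <= l.+1)%N ->
    y0 \in @SG n d S' l i0 -> P i x -> ~~ comparable x y0 || succ x y0.

Definition cond_ii n d (S' : seq 'rV[R]_n) (l : nat)
  (P : nat -> 'rV[R]_(n * d) -> bool) : Prop :=
  forall i0 x0 i, (i0 <= l.+1)%N -> P i0 x0 -> (i0 <= i)%N -> (i <= l)%N ->
    exists2 y, y \in @SG n d S' l i & succ y x0.

Definition cond_iii n d (l : nat) (P : nat -> 'rV[R]_(n * d) -> bool) : Prop :=
  forall i0 i x0 x, (i0 < i)%N -> (i <= l.+1)%N ->
    P i0 x0 -> P i x -> ~~ comparable x x0 || succ x x0.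

End Defs.

(* Main.v *)
Require Import Defs.
From HB Require Import structures.
From mathcomp Require Import all_boot all_order all_algebra.
From mathcomp Require Import ring.
Import Order.TTheory GRing.Theory Num.Theory.
Local Open Scope ring_scope.

Set Implicit Arguments.
Unset Strict Implicit.
Unset Printing Implicit Defensive.
Section Aux.
Variable R : realFieldType.

Definition Z N (s : 'rV[R]_N) := \sum_(j < N) s 0 j = 0.

Lemma psum0 N (s : 'rV[R]_N) : psum s 0 = 0.
Proof. by rewrite /psum big_pred0. Qed.

Lemma psumS N (s : 'rV[R]_N) (j : 'I_N) : psum s j.+1 = psum s j + s 0 j.
Proof.
rewrite /psum (bigD1 j) //= addrC; congr (_ + _); apply: eq_bigl => i.
rewrite ltnS; case: (ltngtP i j) => h /=.
- by apply/eqP => e; move: h; rewrite e ltnn.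
- by [].
- by apply/negbF/eqP/val_inj.
Qed.

Lemma psum_ge N (s : 'rV[R]_N) k : (N <= k)%N -> psum s k = \sum_(j < N) s 0 j.
Proof. by move=> h; apply: eq_bigl => i; rewrite (leq_trans (ltn_ord i)). Qed.

Lemma eq_psum N (s t : 'rV[R]_N) : Z s -> Z t ->
  (forall i : 'I_N, (i.+1 < N)%N -> psum s i.+1 = psum t i.+1) -> s = t.
Proof.
move=> zs zt h.
have hk : forall k, psum s k = psum t k.
  case=> [|k]; first by rewrite !psum0.
  case: (ltnP k.+1 N) => hk.
    by apply: (h (Ordinal (ltnW hk))).
  by rewrite !psum_ge // zs zt.
apply/rowP => j.
by apply: (@addrI _ (psum s j)); rewrite -psumS (hk j.+1) (hk j) -psumS.
Qed.

Definition le_ps N (s t : 'rV[R]_N) :=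
  forall i : 'I_N, (i.+1 < N)%N -> psum s i.+1 <= psum t i.+1.

Lemma succP N (s t : 'rV[R]_N) : reflect (s != t /\ le_ps s t) (succ s t).
Proof.
apply: (iffP andP) => [[h1 /forallP h2]|[h1 h2]]; split => //.
  by move=> i hi; move/implyP: (h2 i); apply.
by apply/forallP => i; apply/implyP; apply: h2.
Qed.

Lemma succ_trans N (s t u : 'rV[R]_N) : Z s -> Z t -> Z u ->
  succ s t -> succ t u -> succ s u.
Proof.
move=> zs zt zu /succP[n1 l1] /succP[n2 l2]; apply/succP; split.
  apply/eqP => e; subst u; move/eqP: n1; apply; apply: eq_psum => // i hi.
  by apply/eqP; rewrite eq_le l1 // l2.
by move=> i hi; apply: le_trans (l1 i hi) (l2 i hi).
Qed.

Lemma succ_anti N (s t : 'rV[R]_N) : Z s -> Z t -> succ s t -> succ t s -> False.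
Proof.
move=> zs zt /succP[n1 l1] /succP[n2 l2]; move/eqP: n1; apply; apply: eq_psum => // i hi.
by apply/eqP; rewrite eq_le l1 // l2.
Qed.

Lemma le_ps_all N (s t : 'rV[R]_N) : Z s -> Z t -> le_ps s t -> forall k, psum s k <= psum t k.
Proof.
move=> zs zt h [|k]; first by rewrite !psum0.
case: (ltnP k.+1 N) => hk; first by apply: (h (Ordinal (ltnW hk))).
by rewrite !psum_ge // zs zt.
Qed.


Lemma index_allpairs (T1 T2 : eqType) (s1 : seq T1) (s2 : seq T2) a b :
  a \in s1 -> b \in s2 ->
  index (a, b) [seq (x1, x2) | x1 <- s1, x2 <- s2] = (index a s1 * size s2 + index b s2)%N.
Proof.
elim: s1 => //= x s1 IH; rewrite inE => ha hb; rewrite index_cat.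
case: (eqVneq a x) => [->|nax].
  rewrite map_f // mul0n add0n index_map //.
  by move=> y1 y2 [].
have -> : (a, b) \in [seq (x, y) | y <- s2] = false.
  by apply/mapP => -[y _ [e _]]; move/eqP: nax; rewrite e.
rewrite /= size_map IH //; last by case/orP: ha => // /eqP e; move/eqP: nax.
by rewrite mulSn addnA.
Qed.

Lemma enum_rank_val (T : finType) (x : T) : val (enum_rank x) = index x (enum T).
Proof.
by rewrite -{2}(nth_enum_rank x x) index_uniq // ?enum_uniq // -cardE ltn_ord.
Qed.

Lemma mxvec_index_val m k (i : 'I_m) (j : 'I_k) :
  val (mxvec_index i j) = (i * k + j)%N.
Proof.
rewrite /mxvec_index /= enum_rank_val enumT unlock /=.
by rewrite index_allpairs ?mem_enum // index_enum_ord size_enum_ord index_enum_ord.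
Qed.

Section G.
Variables (n d : nat) (hd : (0 < d)%N).

Lemma Gmap_entry (s : 'rV[R]_n) (k : 'I_(n * d)) q r : (r < d)%N ->
  val k = (q * d + r)%N -> Gmap d s 0 k = psum s q.+1 - psum s q.
Proof.
move=> hr; case/mxvec_indexP: k => i j; rewrite mxvec_index_val => e.
have iq : val i = q.
  by have := congr1 (divn^~ d) e; rewrite /= !divnMDl // !divn_small ?ltn_ord // !addn0.
by rewrite /Gmap mxvecE mxE -iq psumS; rewrite [psum s i + _]addrC addrK.
Qed.

Lemma Gmap_part (s : 'rV[R]_n) q : (q < n)%N ->
  psum (Gmap d s) (q * d) = d%:R * psum s q ->
  forall r, (r <= d)%N ->
  psum (Gmap d s) (q * d + r) = d%:R * psum s q + r%:R * (psum s q.+1 - psum s q).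
Proof.
move=> hq h0; elim=> [|r IH] hr; first by rewrite addn0 h0 mul0r addr0.
have hk : (q * d + r < n * d)%N.
  apply: (@leq_trans (q.+1 * d)); first by rewrite mulSnr ltn_add2l.
  by rewrite leq_mul2r hq orbT.
rewrite addnS (psumS _ (Ordinal hk)) /= IH ?(ltnW hr) //.
rewrite (@Gmap_entry s (Ordinal hk) q r) //.
have -> : r.+1%:R = r%:R + 1 :> R by rewrite -addn1 natrD.
ring.
Qed.

Lemma Gmap_mult (s : 'rV[R]_n) q : (q <= n)%N -> psum (Gmap d s) (q * d) = d%:R * psum s q.
Proof.
elim: q => [|q IH] hq; first by rewrite mul0n !psum0 mulr0.
rewrite mulSnr (Gmap_part hq (IH (ltnW hq))) //; ring.
Qed.

Lemma Gmap_Z (s : 'rV[R]_n) : Z s -> Z (Gmap d s).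
Proof.
move=> zs; rewrite /Z -(@psum_ge _ _ (n * d)) // Gmap_mult // psum_ge // zs mulr0. reflexivity.
Qed.

Lemma Gmap_inj (s t : 'rV[R]_n) : Gmap d s = Gmap d t -> s = t.
Proof.
move=> e; apply/rowP => j.
have := congr1 (fun v : 'rV[R]_(n * d) => v 0 (mxvec_index j (Ordinal hd))) e.
by rewrite /Gmap !mxvecE !mxE.
Qed.

Lemma Gmap_le (s t : 'rV[R]_n) : Z s -> Z t -> le_ps s t -> le_ps (Gmap d s) (Gmap d t).
Proof.
move=> zs zt h i hi.
have hq : (i.+1 %/ d < n)%N by rewrite ltn_divLR.
have hr : (i.+1 %% d <= d)%N by rewrite ltnW // ltn_pmod.
rewrite (divn_eq i.+1 d) !Gmap_part ?Gmap_mult ?(ltnW hq) //.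
set r := (i.+1 %% d)%N; set q := (i.+1 %/ d)%N.
have e : forall x y : R, d%:R * x + r%:R * (y - x) = (d - r)%:R * x + r%:R * y.
  by move=> x y; rewrite natrB //; ring.
rewrite !e; apply: lerD; apply: ler_wpM2l => //; exact: le_ps_all.
Qed.

Lemma Gmap_succ (s t : 'rV[R]_n) : Z s -> Z t -> succ s t -> succ (Gmap d s) (Gmap d t).
Proof.
move=> zs zt /succP[ne le]; apply/succP; split; last exact: Gmap_le.
by apply: contra ne => /eqP/Gmap_inj ->.
Qed.
End G.

Lemma count_le_in (T : eqType) (X : seq T) (a1 a2 : pred T) :
  (forall x, x \in X -> a1 x -> a2 x) -> (count a1 X <= count a2 X)%N.
Proof.
elim: X => //= y X IH h; apply: leq_add.
  by case h1: (a1 y) => //; rewrite (h y) // mem_head.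
by apply: IH => x hx; apply: h; rewrite inE hx orbT.
Qed.

Lemma count_lt (T : eqType) (X : seq T) (a1 a2 : pred T) :
  (forall x, x \in X -> a1 x -> a2 x) -> (exists2 x, x \in X & a2 x && ~~ a1 x) ->
  (count a1 X < count a2 X)%N.
Proof.
elim: X => [|y X IH] h [x]; first by [].
have h' : forall x, x \in X -> a1 x -> a2 x by move=> z hz; apply: h; rewrite inE hz orbT.
rewrite inE => /orP[/eqP->|hx] /andP[h2 h1] /=.
  by rewrite h2 (negbTE h1) add0n add1n ltnS count_le_in.
rewrite -addnS; apply: leq_add; last by apply: IH => //; exists x => //; rewrite h2.
by case h1': (a1 y) => //; rewrite (h y) // mem_head.
Qed.

Lemma succ_irr N (s : 'rV[R]_N) : succ s s = false.
Proof. by rewrite /succ eqxx. Qed.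

Lemma maxel_above N (X : seq 'rV[R]_N) (a : 'rV_N) : (forall x, x \in X -> Z x) ->
  Z a -> has (fun y => succ y a) X -> exists2 m, m \in maxel X & succ m a.
Proof.
move=> hX; move: {2}(count (fun y => succ y a) X).+1 (ltnSn (count (fun y => succ y a) X)) => c.
elim: c a => // c IH a hc za /hasP[z zX sza].
case hz: (z \in maxel X); first by exists z.
move: hz; rewrite mem_filter zX andbT => /negbFE hz.
have [|m hm smz] := IH z _ (hX z zX) hz.
  rewrite ltnS in hc; apply: leq_trans hc; apply: count_lt.
    by move=> x hx sxz; exact: (succ_trans (hX x hx) (hX z zX) za sxz sza).
  by exists z => //; rewrite sza succ_irr.
exists m => //.
have zm : Z m by move: hm; rewrite mem_filter => /andP[_ hm2]; apply: hX.
exact: (succ_trans zm (hX z zX) za smz sza).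
Qed.

Lemma remkS N (S' : seq 'rV[R]_N) k :
  remk S' k.+1 = [seq x <- remk S' k | x \notin maxel (remk S' k)].
Proof. by []. Qed.

Lemma mem_remk N (S' : seq 'rV[R]_N) k x : x \in remk S' k -> x \in S'.
Proof.
elim: k => // k IH; rewrite remkS mem_filter => /andP[_]; exact: IH.
Qed.

Lemma UP n d (hd : (0 < d)%N) (S' : seq 'rV[R]_n) l i y :
  (forall s, s \in S' -> Z s) -> (i < l)%N -> y \in SG d S' l i ->
  exists2 y', y' \in SG d S' l i.+1 & succ y' y.
Proof.
move=> hS hi; rewrite /SG /Slev /Saux => /mapP[a ha ->].
have e : (l - i = (l - i.+1).+1)%N by rewrite subnSK.
rewrite e in ha; move: ha; set k := (l - i.+1)%N.
rewrite mem_filter remkS mem_filter => /andP[_ /andP[/negP ham har]].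
have hk : forall x, x \in remk S' k -> Z x by move=> x /mem_remk; apply: hS.
have hh : has (fun y => succ y a) (remk S' k).
  by apply/negPn/negP => hn; apply: ham; rewrite mem_filter hn har.
have [m hm sma] := maxel_above hk (hk a har) hh.
have zm : Z m by apply: hk; move: hm; rewrite mem_filter => /andP[hm1 hm2]; exact: hm2.
exists (Gmap d m); first exact: map_f.
exact: (Gmap_succ hd zm (hk a har) sma).
Qed.
End Aux.

Unset Implicit Arguments.

Theorem proposition4p7 (R : realFieldType) (n d : nat) (hd : (1 < d)%N)
  (S' : seq 'rV[R]_n) (S : seq 'rV[R]_(n * d))
  (hS' : forall s, s \in S' -> chamber_vec s)
  (hS : forall s, s \in S -> chamber_vec s)
  (l : nat) (hl : remk S' l.+1 = [::]) (hl' : remk S' l != [::]) :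
  exists P : nat -> 'rV[R]_(n * d) -> bool,
    [/\ is_partition S' S l P, cond_i S' l P, cond_ii S' l P,
        (forall Q : nat -> 'rV[R]_(n * d) -> bool,
           is_partition S' S l Q -> cond_i S' l Q -> cond_ii S' l Q ->
           forall i x, (i <= l.+1)%N -> Q i x = P i x)
      & cond_iii l P].
Proof.
have hd0 : (0 < d)%N by apply: ltnW.
have ZS : forall x, x \in S -> Z x by move=> x /hS [_ h].
have ZS' : forall x, x \in S' -> Z x by move=> x /hS' [_ h].
have ZT : forall x, x \in Stilde S' S l -> Z x.
  by move=> x; rewrite mem_filter => /andP[_ /ZS].
have ZSG : forall i y, y \in SG d S' l i -> Z y.
  move=> i y /mapP[a ha ->]; apply: Gmap_Z => //; apply: ZS'; apply: (@mem_remk _ _ _ (l - i)).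
  by move: ha; rewrite mem_filter => /andP[].
pose A x i := has (fun y => succ y x) (SG d S' l i).
pose f x := find (A x) (iota 0 l.+1).
have fle : forall x, (f x <= l.+1)%N.
  by move=> x; rewrite /f -{2}(size_iota 0 l.+1) find_size.
have fA : forall x, (f x <= l)%N -> A x (f x).
  move=> x h; have : has (A x) (iota 0 l.+1) by rewrite has_find size_iota ltnS.
  by move/(nth_find 0); rewrite nth_iota ?add0n // ltnS.
have fB : forall x i, (i < f x)%N -> ~~ A x i.
  move=> x i h; have := before_find 0 h; rewrite nth_iota ?add0n ?size_iota.
    by move=> ->.
  exact: leq_trans h (fle x).
have fC : forall x i, (i <= l)%N -> A x i -> (f x <= i)%N.
  move=> x i hi hA; rewrite leqNgt; apply/negP => h; by move/negP: (fB x i h).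
have Aup : forall x i j, Z x -> A x i -> (i <= j)%N -> (j <= l)%N -> A x j.
  move=> x i j zx hA; elim: j => [|j IH] hij hjl.
    by move: hij; rewrite leqn0 => /eqP <-.
  case: (ltngtP i j.+1) => [h||<-] //; last by rewrite ltnNge hij.
  have /hasP[y hy syx] := IH h (ltnW hjl).
  have [y' hy' sy'y] := UP hd0 ZS' hjl hy.
  apply/hasP; exists y' => //.
  exact: (succ_trans (ZSG _ _ hy') (ZSG _ _ hy) zx sy'y syx).
pose P i x := (x \in Stilde S' S l) && (i == f x).
have Part : is_partition S' S l P.
  split.
  - by move=> i x _ /andP[].
  - by move=> x hx; exists (f x); rewrite ?fle // /P hx eqxx.
  - by move=> i j x _ _ /andP[_ /eqP ->] /andP[_ /eqP ->].
have Ci : cond_i S' l P.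
  move=> i0 i y0 x hi0 hi hy0 /andP[hx /eqP ei]; subst i.
  have ns : ~~ succ y0 x.
    by apply: contra (fB x i0 hi0) => h; apply/hasP; exists y0.
  case hs: (succ x y0); first by rewrite orbT.
  by rewrite /Defs.comparable hs (negbTE ns).
have Cii : cond_ii S' l P.
  move=> i0 x0 i _ /andP[hx /eqP ei] hii hil; subst i0.
  have hA := Aup x0 _ _ (ZT x0 hx) (fA x0 (leq_trans hii hil)) hii hil.
  by case/hasP: hA => y hy syx; exists y.
exists P; split => //.
- move=> Q [Q1 Q2 Q3] Qi Qii.
  have key : forall i x, (i <= l.+1)%N -> Q i x -> i = f x.
    move=> i x hi hq; have hx := Q1 i x hi hq; have zx := ZT x hx.
    apply/eqP; rewrite eqn_leq; apply/andP; split; last first.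
      case: (leqP i l) => hil; last by rewrite (leq_trans (fle x)).
      have [y hy syx] := Qii i x i hi hq (leqnn i) hil.
      by apply: fC hil _; apply/hasP; exists y.
    rewrite leqNgt; apply/negP => hlt.
    have /hasP[y0 hy0 sy0x] := fA x (leq_trans hlt hi).
    have := Qi (f x) i y0 x hlt hi hy0 hq.
    rewrite /Defs.comparable sy0x orbT /= => sxy0.
    exact: (succ_anti zx (ZSG _ _ hy0) sxy0 sy0x).
  move=> i x hi; apply/idP/idP.
    by move=> hq; rewrite /P (Q1 i x hi hq) /= (key i x hi hq).
  case/andP=> hx /eqP ei; have [j hj hq] := Q2 x hx.
  by rewrite ei -(key j x hj hq).
- move=> i0 i x0 x hi0 hi /andP[hx0 /eqP e0] /andP[hx /eqP e]; subst i0 i.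
  case sx: (succ x x0); first by rewrite orbT.
  rewrite /Defs.comparable sx /= orbF; apply/negP => sx0x.
  have /hasP[y hy syx0] := fA x0 (leq_trans hi0 hi).
  have hAx : A x (f x0).
    apply/hasP; exists y => //.
    exact: (succ_trans (ZSG _ _ hy) (ZT x0 hx0) (ZT x hx) syx0 sx0x).
  have := fC x (f x0) (leq_trans hi0 hi) hAx.
  by rewrite leqNgt hi0.
Qed.
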